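(* Let $\beta,\sigma,\kappa,\gamma,\delta$ be parameters with $\beta,\sigma,\kappa\ge 0$, $\gamma>0$, $\kappa+\sigma>0$, $\delta>0$, and let $0\le q\le 1$. Consider the system \begin{align*} \dot{A}(t)&=q\beta \big(1-A(t)-I(t)-R(t)\big)\big(A(t)+I(t)\big)-\sigma A(t)-\kappa A(t),\\ \dot{I}(t)&=(1-q)\beta \big(1-A(t)-I(t)-R(t)\big)\big(A(t)+I(t)\big) +\sigma A(t)-\gamma I(t),\\ \dot{R}(t)&=\kappa A(t)+\gamma I(t) - \delta R(t), \end{align*} with $S(t)=1-A(t)-I(t)-R(t)$. If $$R_{0}:= \max\left( \frac{\beta}{\kappa+\gamma+\sigma},\ \frac{\beta\big(q\gamma+(1-q)\kappa+\sigma\big)}{\gamma(\kappa+\sigma)} \right) <1,$$ then the disease-free equilibrium $(S,A,I,R)=(1,0,0,0)$ is globally asymptotically stable.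
   Context: This is the single-group SAIR(S) model obtained from $\dot S=-\beta S(A+I)+\delta R$, $\dot A=q\beta S(A+I)-\sigma A-\kappa A$, $\dot I=(1-q)\beta S(A+I)+\sigma A-\gamma I$, $\dot R=\kappa A+\gamma I-\delta R$ by eliminating $S=1-A-I-R$. Here $S,A,I,R$ are the proportions of susceptible, asymptomatic-infected, symptomatic-infected and recovered individuals (so states lie in $A,I,R\ge 0$, $A+I+R\le 1$); $\beta$ is the transmission rate, $\sigma$ the asymptomatic-to-symptomatic progression rate, $\kappa,\gamma$ the recovery rates of asymptomatic and symptomatic infected, $\delta$ the rate at which immunity recedes, and $q$ the proportion of new infections that are asymptomatic. *)

(* Defs.v *)
From Stdlib Require Import Reals.
From Coquelicot Require Import Coquelicot.
Open Scope R_scope.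

Definition SAIR_R0 (beta sigma kappa gamma q : R) : R :=
  Rmax (beta / (kappa + gamma + sigma))
       (beta * (q * gamma + (1 - q) * kappa + sigma) / (gamma * (kappa + sigma))).

Definition in_Omega (a i r : R) : Prop :=
  0 <= a /\ 0 <= i /\ 0 <= r /\ a + i + r <= 1.

Definition SAIR_solution (beta sigma kappa gamma delta q : R)
    (A I Rc : R -> R) : Prop :=
  forall t, 0 <= t ->
    is_derive A t (q * beta * (1 - A t - I t - Rc t) * (A t + I t)
                     - sigma * A t - kappa * A t) /\
    is_derive I t ((1 - q) * beta * (1 - A t - I t - Rc t) * (A t + I t)
                     + sigma * A t - gamma * I t) /\
    is_derive Rc t (kappa * A t + gamma * I t - delta * Rc t).

(* Distance of the state (S,A,I,R) = (1-A-I-R, A, I, R) to the disease-free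
   equilibrium (1,0,0,0), measured in the l1 norm. *)
Definition dist_DFE (a i r : R) : R :=
  Rabs ((1 - a - i - r) - 1) + Rabs a + Rabs i + Rabs r.

Definition DFE_globally_asymptotically_stable
    (beta sigma kappa gamma delta q : R) : Prop :=
  (forall eps, 0 < eps -> exists eta, 0 < eta /\
     forall A I Rc : R -> R,
       SAIR_solution beta sigma kappa gamma delta q A I Rc ->
       in_Omega (A 0) (I 0) (Rc 0) ->
       dist_DFE (A 0) (I 0) (Rc 0) < eta ->
       forall t, 0 <= t -> dist_DFE (A t) (I t) (Rc t) < eps) /\
  (forall A I Rc : R -> R,
       SAIR_solution beta sigma kappa gamma delta q A I Rc ->
       in_Omega (A 0) (I 0) (Rc 0) ->
       is_lim (fun t => dist_DFE (A t) (I t) (Rc t)) p_infty 0).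

(* Main.v *)
Require Import Defs.
From Stdlib Require Import Reals Lra Psatz.
From Coquelicot Require Import Coquelicot.
Open Scope R_scope.

Lemma rmin_cases (X : R) : (X <= 0 /\ Rmin X 0 = X) \/ (0 <= X /\ Rmin X 0 = 0).
Proof. unfold Rmin; destruct (Rle_dec X 0); [left|right]; lra. Qed.

Lemma prod_nonpos u v : 0 <= u -> v <= 0 -> u * v <= 0.
Proof. intros; nra. Qed.

Lemma L1 (X Y Z M : R) : Rabs X <= M -> Rabs Y <= M -> Rabs Z <= M ->
  Y * Z * Rmin X 0 <= M * ((Rmin X 0)^2 + (Rmin Y 0)^2 + (Rmin Z 0)^2).
Proof.
  intros hx hy hz.
  destruct (rmin_cases X) as [[h1 e1]|[h1 e1]]; rewrite e1;
  destruct (rmin_cases Y) as [[h2 e2]|[h2 e2]]; rewrite e2;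
  destruct (rmin_cases Z) as [[h3 e3]|[h3 e3]]; rewrite e3;
  apply Rabs_le_between in hx; apply Rabs_le_between in hy; apply Rabs_le_between in hz.
  all: try nra.
  all: assert (0 <= M) by lra.
  all: first [ assert (0 <= Y*Z) by nra; assert (Y*Z*X <= 0) by (apply prod_nonpos; lra); nra
   | assert (Y*Z <= 0) by nra; assert (0 <= Y*Z*X) by nra; nra
   | assert (0 <= Y*X) by nra; assert (Y*X*Z <= Y*X*M) by (apply Rmult_le_compat_l; lra); assert (M*(Y*X) <= M*(X^2+Y^2+0^2)) by (apply Rmult_le_compat_l; nra); nra
   | assert (0 <= Z*X) by nra; assert (Z*X*Y <= Z*X*M) by (apply Rmult_le_compat_l; lra); assert (M*(Z*X) <= M*(X^2+0^2+Z^2)) by (apply Rmult_le_compat_l; nra); nra].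
Qed.

Lemma L2 (X Z : R) : X * Rmin Z 0 <= (Rmin X 0)^2 + (Rmin Z 0)^2.
Proof.
  destruct (rmin_cases X) as [[h1 e1]|[h1 e1]]; rewrite e1;
  destruct (rmin_cases Z) as [[h3 e3]|[h3 e3]]; rewrite e3; nra.
Qed.

Lemma L3 (X : R) : X * Rmin X 0 = (Rmin X 0)^2.
Proof. destruct (rmin_cases X) as [[h1 e1]|[h1 e1]]; rewrite e1; ring. Qed.

Lemma L4 (X : R) : Rabs (Rmin X 0) <= Rabs X.
Proof. destruct (rmin_cases X) as [[h1 e1]|[h1 e1]]; rewrite e1; rewrite ?Rabs_R0; try apply Rle_refl; apply Rabs_pos. Qed.

Lemma L5 (S X M : R) : Rabs S <= M -> S * (Rmin X 0)^2 <= M * (Rmin X 0)^2.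
Proof. intros h. apply Rmult_le_compat_r. nra. apply Rle_trans with (Rabs S). apply Rle_abs. auto. Qed.

Lemma key (A I Rr beta sigma kappa gamma delta q M : R) :
  0 <= beta -> 0 <= sigma -> 0 <= kappa -> 0 <= gamma -> 0 <= delta -> 0 <= q <= 1 ->
  Rabs A <= M -> Rabs I <= M -> Rabs Rr <= M -> Rabs (1 - A - I - Rr) <= M ->
  2 * Rmin A 0 * (q * beta * (1 - A - I - Rr) * (A + I) - sigma * A - kappa * A)
  + 2 * Rmin I 0 * ((1 - q) * beta * (1 - A - I - Rr) * (A + I) + sigma * A - gamma * I)
  + 2 * Rmin Rr 0 * (kappa * A + gamma * I - delta * Rr)
  + 2 * Rmin (1 - A - I - Rr) 0 *
      (- (q * beta * (1 - A - I - Rr) * (A + I) - sigma * A - kappa * A)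
       - ((1 - q) * beta * (1 - A - I - Rr) * (A + I) + sigma * A - gamma * I)
       - (kappa * A + gamma * I - delta * Rr))
  <= 2 * (4 * beta * M + sigma + kappa + gamma + delta) *
     ((Rmin A 0)^2 + (Rmin I 0)^2 + (Rmin Rr 0)^2 + (Rmin (1 - A - I - Rr) 0)^2).
Proof.
  intros hb hs hk hg hd hq hA hI hR hS.
  set (S := 1 - A - I - Rr) in *.
  assert (eA := L3 A). assert (eI := L3 I). assert (eR := L3 Rr). assert (eS := L3 S).
  set (a := Rmin A 0) in *. set (i := Rmin I 0) in *.
  set (r := Rmin Rr 0) in *. set (s := Rmin S 0) in *.
  set (P := a^2 + i^2 + r^2 + s^2).
  assert (hM : 0 <= M) by (apply Rle_trans with (Rabs A); [apply Rabs_pos|auto]).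
  assert (pa : 0 <= a^2) by nra. assert (pi : 0 <= i^2) by nra.
  assert (pr : 0 <= r^2) by nra. assert (ps : 0 <= s^2) by nra.
  assert (c1 : 0 <= q * beta) by nra.
  assert (c2 : 0 <= (1 - q) * beta) by nra.
  assert (F1 : q*beta*(S*A*a) <= q*beta*M * P).
  { rewrite (Rmult_assoc (q*beta) M); apply Rmult_le_compat_l; auto.
    rewrite (Rmult_assoc S A a), eA. apply Rle_trans with (M * a^2). apply L5; auto.
    apply Rmult_le_compat_l; unfold P; lra. }
  assert (F2 : q*beta*(S*I*a) <= q*beta*M * P).
  { rewrite (Rmult_assoc (q*beta) M); apply Rmult_le_compat_l; auto.
    apply Rle_trans with (M * (a^2 + s^2 + i^2)). apply L1; auto.
    apply Rmult_le_compat_l; unfold P; lra. }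
  assert (F5 : (1-q)*beta*(S*A*i) <= (1-q)*beta*M * P).
  { rewrite (Rmult_assoc ((1-q)*beta) M); apply Rmult_le_compat_l; auto.
    apply Rle_trans with (M * (i^2 + s^2 + a^2)). apply L1; auto.
    apply Rmult_le_compat_l; unfold P; lra. }
  assert (F6 : (1-q)*beta*(S*I*i) <= (1-q)*beta*M * P).
  { rewrite (Rmult_assoc ((1-q)*beta) M); apply Rmult_le_compat_l; auto.
    rewrite (Rmult_assoc S I i), eI. apply Rle_trans with (M * i^2). apply L5; auto.
    apply Rmult_le_compat_l; unfold P; lra. }
  assert (F3 : 0 <= sigma * (A * a)) by (rewrite eA; nra).
  assert (F4 : 0 <= kappa * (A * a)) by (rewrite eA; nra).
  assert (F8 : 0 <= gamma * (I * i)) by (rewrite eI; nra).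
  assert (F11 : 0 <= delta * (Rr * r)) by (rewrite eR; nra).
  assert (F7 : sigma * (A * i) <= sigma * P)
    by (apply Rmult_le_compat_l; auto; apply Rle_trans with (a^2+i^2); [apply L2|unfold P; lra]).
  assert (F9 : kappa * (A * r) <= kappa * P)
    by (apply Rmult_le_compat_l; auto; apply Rle_trans with (a^2+r^2); [apply L2|unfold P; lra]).
  assert (F10 : gamma * (I * r) <= gamma * P)
    by (apply Rmult_le_compat_l; auto; apply Rle_trans with (i^2+r^2); [apply L2|unfold P; lra]).
  assert (F13 : delta * (Rr * s) <= delta * P)
    by (apply Rmult_le_compat_l; auto; apply Rle_trans with (r^2+s^2); [apply L2|unfold P; lra]).
  assert (F12 : beta * (- (S * s) * (A + I)) <= beta * (2 * M) * P).
  { rewrite Rmult_assoc. apply Rmult_le_compat_l; auto. rewrite eS.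
    apply Rabs_le_between in hA. apply Rabs_le_between in hI.
    apply Rle_trans with (2 * M * s^2). nra. apply Rmult_le_compat_l. lra. unfold P; lra. }
  unfold P in *. lra.
Qed.

Lemma derive_cont (f : R -> R) x l : is_derive f x l -> continuity_pt f x.
Proof.
  intros H. apply continuity_pt_filterlim. apply (ex_derive_continuous (K:=R_AbsRing) (V:=R_NormedModule) f x). exists l; exact H.
Qed.

Lemma gronwall (g dg : R -> R) (L T : R) :
  (forall t, 0 <= t <= T -> is_derive g t (dg t)) ->
  (forall t, 0 <= t <= T -> dg t <= L * g t) ->
  forall t, 0 <= t <= T -> g t <= g 0 * exp (L * t).
Proof.
  intros Hd Hl t Ht.
  set (h := fun u => g u * exp (- L * u)).
  set (dh := fun u => dg u * exp (- L * u) + g u * (- L * exp (- L * u))).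
  assert (Hh : forall u, 0 <= u <= T -> is_derive h u (dh u)).
  { intros u Hu. unfold h, dh.
    apply (is_derive_mult g (fun u => exp (- L * u))); [apply Hd; auto| |].
    - evar_last. apply (is_derive_comp exp (fun u => - L * u)).
      apply is_derive_exp. evar_last. apply is_derive_scal. apply is_derive_id.
      simpl. reflexivity. simpl. unfold scal, one; simpl. unfold mult; simpl. ring.
    - intros; unfold mult; simpl; ring. }
  destruct (MVT_gen h 0 t dh) as [c [Hc E]].
  - intros x Hx. rewrite Rmin_left in Hx by lra. rewrite Rmax_right in Hx by lra.
    apply Hh; lra.
  - intros x Hx. rewrite Rmin_left in Hx by lra. rewrite Rmax_right in Hx by lra.
    apply derive_cont with (dh x). apply Hh; lra.
  - rewrite Rmin_left in Hc by lra. rewrite Rmax_right in Hc by lra.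
    assert (dh c <= 0).
    { unfold dh. assert (dg c <= L * g c) by (apply Hl; lra).
      assert (0 < exp (- L * c)) by apply exp_pos. nra. }
    assert (h t <= h 0) by nra.
    unfold h in H0. rewrite Rmult_0_r, exp_0, Rmult_1_r in H0.
    assert (exp (- L * t) * exp (L * t) = 1).
    { rewrite <- exp_plus. replace (- L * t + L * t) with 0 by ring. apply exp_0. }
    assert (0 < exp (L * t)) by apply exp_pos.
    apply Rle_trans with (g t * exp (- L * t) * exp (L * t)).
    + rewrite Rmult_assoc, H1; lra.
    + apply Rmult_le_compat_r; lra.
Qed.

Definition sqn (x : R) := (Rmin x 0) ^ 2.

Lemma sqn_bound x h : Rabs (sqn (x + h) - sqn x - 2 * Rmin x 0 * h) <= 3 * h ^ 2.
Proof.
  unfold sqn, Rmin.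
  destruct (Rle_dec (x+h) 0); destruct (Rle_dec x 0);
  apply Rabs_le_between; split; nra.
Qed.

Lemma is_derive_sqn x : is_derive sqn x (2 * Rmin x 0).
Proof.
  apply is_derive_Reals. intros eps Heps.
  exists (mkposreal (eps / 4) ltac:(lra)). intros h Hh0 Hh. simpl in Hh.
  assert (B := sqn_bound x h).
  replace ((sqn (x + h) - sqn x) / h - 2 * Rmin x 0)
    with ((sqn (x + h) - sqn x - 2 * Rmin x 0 * h) / h) by (field; auto).
  unfold Rdiv. rewrite Rabs_mult, Rabs_inv.
  assert (0 < Rabs h) by (apply Rabs_pos_lt; auto).
  apply Rle_lt_trans with (3 * h^2 * / Rabs h).
  apply Rmult_le_compat_r. left; apply Rinv_0_lt_compat; auto. auto.
  replace (3 * h^2 * / Rabs h) with (3 * Rabs h).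
  lra. rewrite <- pow2_abs. field. lra.
Qed.

Lemma sqn_zero_iff x : sqn x = 0 -> 0 <= x.
Proof. unfold sqn, Rmin. destruct (Rle_dec x 0); intros; nra. Qed.

Lemma sqn_nonneg x : 0 <= sqn x.
Proof. unfold sqn. nra. Qed.

Lemma sqn_pos x : 0 <= x -> sqn x = 0.
Proof. unfold sqn, Rmin. destruct (Rle_dec x 0); intros; nra. Qed.

Lemma invariance (beta sigma kappa gamma delta q : R) (A I Rc : R -> R) :
  0 <= beta -> 0 <= sigma -> 0 <= kappa -> 0 <= gamma -> 0 <= delta -> 0 <= q <= 1 ->
  SAIR_solution beta sigma kappa gamma delta q A I Rc ->
  in_Omega (A 0) (I 0) (Rc 0) ->
  forall t, 0 <= t -> in_Omega (A t) (I t) (Rc t).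
Proof.
  intros hb hs hk hg hd hq Hsol H0 T HT.
  assert (Hc : forall u, 0 <= u -> continuity_pt A u /\ continuity_pt I u /\ continuity_pt Rc u).
  { intros u Hu. destruct (Hsol u Hu) as [h1 [h2 h3]].
    repeat split; eapply derive_cont; eauto. }
  destruct (continuity_ab_maj (fun u => Rabs (A u) + Rabs (I u) + Rabs (Rc u)) 0 T HT)
    as [Mx [HMx _]].
  { intros c Hc'. destruct (Hc c ltac:(lra)) as [c1 [c2 c3]].
    apply continuity_pt_plus; [apply continuity_pt_plus|];
    [apply (continuity_pt_comp A Rabs)|apply (continuity_pt_comp I Rabs)|apply (continuity_pt_comp Rc Rabs)];
    auto; apply Rcontinuity_abs. }
  set (M := 1 + (Rabs (A Mx) + Rabs (I Mx) + Rabs (Rc Mx))).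
  set (psi := fun u => sqn (A u) + sqn (I u) + sqn (Rc u) + sqn (1 - A u - I u - Rc u)).
  set (dpsi := fun u =>
    2 * Rmin (A u) 0 * (q * beta * (1 - A u - I u - Rc u) * (A u + I u) - sigma * A u - kappa * A u)
  + 2 * Rmin (I u) 0 * ((1 - q) * beta * (1 - A u - I u - Rc u) * (A u + I u) + sigma * A u - gamma * I u)
  + 2 * Rmin (Rc u) 0 * (kappa * A u + gamma * I u - delta * Rc u)
  + 2 * Rmin (1 - A u - I u - Rc u) 0 *
      (- (q * beta * (1 - A u - I u - Rc u) * (A u + I u) - sigma * A u - kappa * A u)
       - ((1 - q) * beta * (1 - A u - I u - Rc u) * (A u + I u) + sigma * A u - gamma * I u)
       - (kappa * A u + gamma * I u - delta * Rc u))).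
  assert (Hd : forall u, 0 <= u <= T -> is_derive psi u (dpsi u)).
  { intros u Hu. destruct (Hsol u ltac:(lra)) as [h1 [h2 h3]].
    unfold psi, dpsi. evar_last.
    apply (is_derive_plus (fun u => sqn (A u) + sqn (I u) + sqn (Rc u)) (fun u => sqn (1 - A u - I u - Rc u)));
    [apply (is_derive_plus (fun u => sqn (A u) + sqn (I u)) (fun u => sqn (Rc u)));
     [apply (is_derive_plus (fun u => sqn (A u)) (fun u => sqn (I u)))|]|].
    - apply (is_derive_comp sqn A). apply is_derive_sqn. exact h1.
    - apply (is_derive_comp sqn I). apply is_derive_sqn. exact h2.
    - apply (is_derive_comp sqn Rc). apply is_derive_sqn. exact h3.
    - apply (is_derive_comp sqn (fun u => 1 - A u - I u - Rc u)). apply is_derive_sqn.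
      apply (is_derive_minus (fun u => 1 - A u - I u) Rc); [apply (is_derive_minus (fun u => 1 - A u) I);
        [apply (is_derive_minus (fun _ => 1) A)|]|]; eauto.
      apply is_derive_const.
    - unfold plus, scal, minus, opp, mult, zero; simpl. unfold mult, plus; simpl. unfold plus; simpl. ring. }
  assert (Hl : forall u, 0 <= u <= T -> dpsi u <= 2 * (4 * beta * M + sigma + kappa + gamma + delta) * psi u).
  { intros u Hu. assert (Hb := HMx u Hu). simpl in Hb.
    assert (0 <= Rabs (A u)) by apply Rabs_pos.
    assert (0 <= Rabs (I u)) by apply Rabs_pos.
    assert (0 <= Rabs (Rc u)) by apply Rabs_pos.
    unfold dpsi, psi, sqn. apply key; auto; try (unfold M; lra).
    apply Rle_trans with (1 + Rabs (A u) + Rabs (I u) + Rabs (Rc u)); [|unfold M; lra].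
    unfold Rminus.
    assert (t1 := Rabs_triang (1 + - A u + - I u) (- Rc u)).
    assert (t2 := Rabs_triang (1 + - A u) (- I u)).
    assert (t3 := Rabs_triang 1 (- A u)).
    rewrite !Rabs_Ropp, Rabs_R1 in *. lra. }
  assert (Hg := gronwall psi dpsi _ T Hd Hl T ltac:(lra)).
  assert (Hp0 : psi 0 = 0).
  { destruct H0 as [a1 [a2 [a3 a4]]]. unfold psi. rewrite !sqn_pos; lra. }
  rewrite Hp0, Rmult_0_l in Hg.
  unfold psi in Hg.
  assert (n1 := sqn_nonneg (A T)). assert (n2 := sqn_nonneg (I T)).
  assert (n3 := sqn_nonneg (Rc T)). assert (n4 := sqn_nonneg (1 - A T - I T - Rc T)).
  assert (z1 : 0 <= A T) by (apply sqn_zero_iff; lra).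
  assert (z2 : 0 <= I T) by (apply sqn_zero_iff; lra).
  assert (z3 : 0 <= Rc T) by (apply sqn_zero_iff; lra).
  assert (z4 : 0 <= 1 - A T - I T - Rc T) by (apply sqn_zero_iff; lra).
  unfold in_Omega; lra.
Qed.

Lemma lim_exp (C nu : R) : 0 < nu -> is_lim (fun t => C * exp (- nu * t)) p_infty 0.
Proof.
  intros Hn.
  replace (Finite 0) with (Rbar_mult C 0) by (simpl; f_equal; ring).
  apply is_lim_scal_l.
  apply (is_lim_comp exp (fun t => - nu * t) p_infty 0 m_infty).
  apply is_lim_exp_m.
  replace m_infty with (Rbar_mult (- nu) p_infty).
  apply is_lim_scal_l. apply is_lim_id.
  simpl. unfold Rbar_mult'. destruct (Rle_dec 0 (-nu)) as [h|h]. exfalso; lra. reflexivity.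
  exists 0. intros; discriminate.
Qed.

Lemma dist_Omega a i r : in_Omega a i r -> dist_DFE a i r = 2 * (a + i + r).
Proof.
  intros [h1 [h2 [h3 h4]]]. unfold dist_DFE.
  replace (1 - a - i - r - 1) with (- (a + i + r)) by ring.
  rewrite Rabs_Ropp, !Rabs_pos_eq; lra.
Qed.

Lemma main_bound (beta sigma kappa gamma delta q : R) :
  0 <= beta -> 0 <= sigma -> 0 <= kappa -> 0 < gamma ->
  0 < kappa + sigma -> 0 < delta -> 0 <= q <= 1 ->
  SAIR_R0 beta sigma kappa gamma q < 1 ->
  exists K0 nu, 0 < K0 /\ 0 < nu /\
    forall A I Rc : R -> R,
       SAIR_solution beta sigma kappa gamma delta q A I Rc ->
       in_Omega (A 0) (I 0) (Rc 0) ->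
       forall t, 0 <= t -> dist_DFE (A t) (I t) (Rc t) <= K0 * dist_DFE (A 0) (I 0) (Rc 0) * exp (- nu * t).
Proof.
  intros hb hs hk hg hks hd hq HR0.
  set (K := q * gamma + (1 - q) * kappa + sigma).
  set (eps := gamma * (kappa + sigma) - beta * K).
  assert (HK : 0 <= K) by (unfold K; nra).
  assert (He : 0 < eps).
  { unfold SAIR_R0 in HR0.
    assert (h := Rle_lt_trans _ _ _ (Rmax_r _ _) HR0).
    assert (0 < gamma * (kappa + sigma)) by nra.
    apply (Rmult_lt_compat_r (gamma * (kappa + sigma))) in h; auto.
    unfold Rdiv in h. rewrite Rmult_assoc, Rinv_l, Rmult_1_r, Rmult_1_l in h by lra.
    unfold eps, K. lra. }
  set (c1 := gamma + sigma). set (c2 := sigma + kappa).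
  set (lam := (kappa + gamma + eps) / eps).
  assert (Hlam : lam * eps = kappa + gamma + eps) by (unfold lam; field; lra).
  assert (Hlp : 0 < lam) by (unfold lam; apply Rdiv_lt_0_compat; lra).
  assert (Hc1 : 0 < c1) by (unfold c1; lra). assert (Hc2 : 0 < c2) by (unfold c2; lra).
  set (nu := Rmin delta (eps / (lam * (c1 + c2)))).
  assert (Hnu : 0 < nu).
  { unfold nu. apply Rmin_pos; auto. apply Rdiv_lt_0_compat; auto. nra. }
  assert (Hnu1 : nu <= delta) by apply Rmin_l.
  assert (Hnu2 : nu * (lam * (c1 + c2)) <= eps).
  { assert (nu <= eps / (lam * (c1 + c2))) by apply Rmin_r.
    assert (0 < lam * (c1 + c2)) by nra.
    apply Rmult_le_compat_r with (r := lam * (c1 + c2)) in H; [|lra].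
    unfold Rdiv in H. rewrite Rmult_assoc, Rinv_l, Rmult_1_r in H by lra. exact H. }
  set (mm := Rmin 1 (Rmin (lam * c1) (lam * c2))).
  set (Mw := 1 + lam * (c1 + c2)).
  assert (Hmm : 0 < mm).
  { unfold mm. apply Rmin_pos; [lra|]. apply Rmin_pos; nra. }
  assert (Hmm1 : mm <= 1) by apply Rmin_l.
  assert (Hmm2 : mm <= lam * c1) by (eapply Rle_trans; [apply Rmin_r|apply Rmin_l]).
  assert (Hmm3 : mm <= lam * c2) by (eapply Rle_trans; [apply Rmin_r|apply Rmin_r]).
  assert (HMw : 0 < Mw) by (unfold Mw; nra).
  exists (Mw / mm), nu. split; [apply Rdiv_lt_0_compat; auto|]. split; auto.
  intros A I Rc Hsol H0 t Ht.
  assert (Hinv := invariance beta sigma kappa gamma delta q A I Rc hb hs hk ltac:(lra) ltac:(lra) hq Hsol H0).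
  set (W := fun u => Rc u + lam * (c1 * A u + c2 * I u)).
  set (dW := fun u => (kappa * A u + gamma * I u - delta * Rc u)
     + lam * (c1 * (q * beta * (1 - A u - I u - Rc u) * (A u + I u) - sigma * A u - kappa * A u)
            + c2 * ((1 - q) * beta * (1 - A u - I u - Rc u) * (A u + I u) + sigma * A u - gamma * I u))).
  assert (Hd : forall u, 0 <= u <= t -> is_derive W u (dW u)).
  { intros u Hu. destruct (Hsol u ltac:(lra)) as [h1 [h2 h3]].
    unfold W, dW.
    apply (is_derive_plus Rc (fun u => lam * (c1 * A u + c2 * I u))); auto.
    apply (is_derive_scal (fun u => c1 * A u + c2 * I u)).
    apply (is_derive_plus (fun u => c1 * A u) (fun u => c2 * I u));
      apply is_derive_scal; auto. }
  assert (Hl : forall u, 0 <= u <= t -> dW u <= - nu * W u).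
  { intros u Hu. destruct (Hinv u ltac:(lra)) as [a1 [a2 [a3 a4]]].
    set (S := 1 - A u - I u - Rc u).
    assert (E : dW u = kappa * A u + gamma * I u - delta * Rc u
               + lam * (beta * K * S * (A u + I u) - gamma * (kappa + sigma) * (A u + I u))).
    { unfold dW, S, K, c1, c2. ring. }
    rewrite E.
    assert (B1 : beta * K * S * (A u + I u) <= beta * K * (A u + I u)).
    { assert (0 <= beta * K) by nra. assert (0 <= S <= 1) by (unfold S; lra).
      assert (0 <= beta * K * (A u + I u)) by nra. nra. }
    assert (B2 : lam * (beta * K * S * (A u + I u)) <= lam * (beta * K * (A u + I u)))
      by (apply Rmult_le_compat_l; lra).
    assert (B3 : lam * (beta * K * (A u + I u) - gamma * (kappa + sigma) * (A u + I u))
                 = - (kappa + gamma + eps) * (A u + I u)).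
    { rewrite <- Hlam. unfold eps. ring. }
    assert (B4 : nu * Rc u <= delta * Rc u) by (apply Rmult_le_compat_r; lra).
    assert (B5 : nu * (lam * (c1 * A u + c2 * I u)) <= eps * (A u + I u)).
    { apply Rle_trans with (nu * (lam * (c1 + c2)) * (A u + I u)).
      - assert (0 <= nu * lam) by nra.
        assert (c1 * A u + c2 * I u <= (c1 + c2) * (A u + I u)) by nra.
        assert (nu * lam * (c1 * A u + c2 * I u) <= nu * lam * ((c1 + c2) * (A u + I u)))
          by (apply Rmult_le_compat_l; auto). nra.
      - apply Rmult_le_compat_r; lra. }
    unfold W. nra. }
  assert (Hg := gronwall W dW (- nu) t Hd Hl t ltac:(lra)).
  destruct (Hinv t Ht) as [b1 [b2 [b3 b4]]].
  destruct H0 as [d1 [d2 [d3 d4]]].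
  rewrite !dist_Omega; [| repeat split; lra | apply Hinv; auto].
  unfold W in Hg.
  assert (Lw : mm * (A t + I t + Rc t) <= Rc t + lam * (c1 * A t + c2 * I t)).
  { assert (mm * A t <= lam * c1 * A t) by (apply Rmult_le_compat_r; lra).
    assert (mm * I t <= lam * c2 * I t) by (apply Rmult_le_compat_r; lra).
    assert (mm * Rc t <= 1 * Rc t) by (apply Rmult_le_compat_r; lra). nra. }
  assert (Uw : Rc 0 + lam * (c1 * A 0 + c2 * I 0) <= Mw * (A 0 + I 0 + Rc 0)).
  { unfold Mw. assert (0 <= lam * c1 * A 0) by nra. assert (0 <= lam * c2 * I 0) by nra.
    assert (0 <= lam * c1 * I 0) by nra. assert (0 <= lam * c2 * A 0) by nra.
    assert (0 <= lam * c1 * Rc 0) by nra. assert (0 <= lam * c2 * Rc 0) by nra. nra. }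
  assert (Hex : 0 < exp (- nu * t)) by apply exp_pos.
  set (N0 := A 0 + I 0 + Rc 0) in *. set (Nt := A t + I t + Rc t) in *.
  set (ex := exp (- nu * t)) in *.
  assert (mm * Nt <= Mw * N0 * ex).
  { eapply Rle_trans. apply Lw. eapply Rle_trans. apply Hg.
    apply Rmult_le_compat_r; lra. }
  assert (Nt <= Mw / mm * N0 * ex).
  { apply Rmult_le_reg_l with mm; auto.
    replace (mm * (Mw / mm * N0 * ex)) with (Mw * N0 * ex) by (field; lra). auto. }
  assert (0 <= ex) by lra.
  nra.
Qed.

Theorem proposition1 (beta sigma kappa gamma delta q : R) :
  0 <= beta -> 0 <= sigma -> 0 <= kappa -> 0 < gamma ->
  0 < kappa + sigma -> 0 < delta -> 0 <= q <= 1 ->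
  SAIR_R0 beta sigma kappa gamma q < 1 ->
  DFE_globally_asymptotically_stable beta sigma kappa gamma delta q.
Proof.
  intros hb hs hk hg hks hd hq HR0.
  destruct (main_bound beta sigma kappa gamma delta q hb hs hk hg hks hd hq HR0)
    as [K0 [nu [HK0 [Hnu Hb]]]].
  split.
  - intros e He. exists (e / K0). split. apply Rdiv_lt_0_compat; auto.
    intros A I Rc Hsol H0 Hlt t Ht.
    assert (h := Hb A I Rc Hsol H0 t Ht).
    assert (exp (- nu * t) <= 1).
    { rewrite <- exp_0. destruct (Req_dec t 0) as [->|n].
      rewrite Rmult_0_r; lra. left; apply exp_increasing; nra. }
    assert (0 < exp (- nu * t)) by apply exp_pos.
    assert (0 <= dist_DFE (A 0) (I 0) (Rc 0)) by (rewrite dist_Omega; auto; destruct H0 as [? [? [? ?]]]; lra).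
    assert (K0 * dist_DFE (A 0) (I 0) (Rc 0) < e).
    { apply Rmult_lt_reg_l with (/ K0). apply Rinv_0_lt_compat; auto.
      rewrite <- Rmult_assoc, Rinv_l, Rmult_1_l by lra. rewrite Rmult_comm. exact Hlt. }
    assert (K0 * dist_DFE (A 0) (I 0) (Rc 0) * exp (- nu * t) <= K0 * dist_DFE (A 0) (I 0) (Rc 0)).
    { rewrite <- (Rmult_1_r (K0 * dist_DFE (A 0) (I 0) (Rc 0))) at 2.
      apply Rmult_le_compat_l; nra. }
    lra.
  - intros A I Rc Hsol H0.
    apply (is_lim_le_le_loc (fun _ => 0) (fun t => K0 * dist_DFE (A 0) (I 0) (Rc 0) * exp (- nu * t))).
    + exists 0. intros t Ht. split.
      * rewrite dist_Omega. destruct (invariance beta sigma kappa gamma delta q A I Rc hb hs hk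
          ltac:(lra) ltac:(lra) hq Hsol H0 t ltac:(lra)) as [? [? [? ?]]]; lra.
        apply (invariance beta sigma kappa gamma delta q A I Rc); auto; lra.
      * apply Hb; auto; lra.
    + apply is_lim_const.
    + apply lim_exp; auto.
Qed.
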